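(* For $n\ge 1$ let $A_n(x)=\sum_{\pi\in S_n}x^{\mathrm{des}(\pi)}$ be the Eulerian polynomial, and let $$C_n(x)=\sum_{\omega\in C_n}x^{\mathrm{des}(\omega)},\qquad \widetilde C_n(x)=\sum_{\omega\in C_n}x^{\mathrm{ades}(\omega)},\qquad T_n(x)=C_n(x^2)+\frac1x\,\widetilde C_n(x^2).$$ Then for every $n\ge1$, $$T_n(x)=(1+x)^{n+1}A_n(x).$$
   Context: $S_n$ is the symmetric group on $[n]$; for $\pi\in S_n$, $\mathrm{des}(\pi)=|\{i\in[n-1]:\pi(i)>\pi(i+1)\}|$. $C_n$ denotes the set of signed permutations of $\pm[n]=\{\pm1,\dots,\pm n\}$, i.e. bijections $\omega$ of $\pm[n]$ with $\omega(-i)=-\omega(i)$ for all $i$; such $\omega$ is recorded by $(\omega(1),\dots,\omega(n))$. Setting $\omega(0)=\omega(n+1)=0$, define $\mathrm{des}(\omega)=|\{i\in\{0,1,\dots,n-1\}:\omega(i)>\omega(i+1)\}|$ and $\mathrm{ades}(\omega)=|\{i\in\{0,1,\dots,n\}:\omega(i)>\omega(i+1)\}|$. *)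

(* Defs.v *)
From mathcomp Require Import all_boot all_order all_fingroup all_algebra.
Set Implicit Arguments. Unset Strict Implicit. Unset Printing Implicit Defensive.
Import Order.TTheory GRing.Theory Num.Theory.

(* Ordinary permutations: pi : 'S_n acts on 'I_n = {0,..,n-1}, encoding
   the permutation i+1 |-> pi(i)+1 of [n].  des counts i in [n-1],
   i.e. 0-based positions j with j+1 < n and pi(j) > pi(j+1). *)
Definition des_perm (n : nat) (p : 'S_n) : nat :=
  #|[set i : 'I_n | (i.+1 < n)%N &&
        [exists j : 'I_n, (val j == i.+1) && (p j < p i)%N]]|.

(* The set pm[n] = {+-1,...,+-n} is encoded as 'I_n * bool :
   (k, false) stands for k+1 and (k, true) for -(k+1). *)
Definition sval_of (n : nat) (a : 'I_n * bool) : int :=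
  if a.2 then (- Posz a.1.+1)%R else Posz a.1.+1.

Definition negpm (n : nat) (a : 'I_n * bool) : 'I_n * bool := (a.1, ~~ a.2).

Definition signed_perms (n : nat) : {set {perm 'I_n * bool}} :=
  [set w : {perm 'I_n * bool} | [forall a, w (negpm a) == negpm (w a)]].

(* w(i) for i in {0,...,n+1}, with w(0) = w(n+1) = 0. *)
Definition wval (n : nat) (w : {perm 'I_n * bool}) (i : nat) : int :=
  match i with
  | 0 => 0
  | k.+1 => oapp (fun j : 'I_n => sval_of (w (j, false))) 0%R (insub k)
  end.

Definition des_signed (n : nat) (w : {perm 'I_n * bool}) : nat :=
  count (fun i => wval w i.+1 < wval w i)%R (iota 0 n).

Definition ades_signed (n : nat) (w : {perm 'I_n * bool}) : nat :=
  count (fun i => wval w i.+1 < wval w i)%R (iota 0 n.+1).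

(* Main.v *)
Require Import Defs.
From mathcomp Require Import all_boot all_order all_fingroup all_algebra.
From mathcomp Require Import ring.
Import Order.TTheory GRing.Theory Num.Theory.
Local Open Scope ring_scope.


Fixpoint dl (s : seq int) : nat :=
  match s with
  | a :: s' => ((match s' with b :: _ => (b < a)%R | [::] => false end) + dl s')%N
  | [::] => 0%N
  end.

Fixpoint ins_all (v : int) (s : seq int) : seq (seq int) :=
  match s with
  | [::] => [:: [:: v]]
  | a :: s' => (v :: s) :: map (cons a) (ins_all v s')
  end.

Definition ext (v : int) (l : seq int) :=
  all (fun y => y < v) l || all (fun y => v < y) l.

Lemma ext_cons {v a l} : ext v (a :: l) -> ext v l.
Proof. by rewrite /ext /= => /orP[/andP[_ ->]|/andP[_ ->]]; rewrite ?orbT. Qed.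

Lemma dl_le h s : (dl (h :: s) <= size s)%N.
Proof.
elim: s h => [//|b s IH] h /=.
by case: (b < h) => /=; rewrite ?add1n ?add0n ?ltnS ?(IH b) // (leq_trans (IH b)).
Qed.

Lemma dl_ext {v h b r} : ext v [:: h, b & r] -> dl [:: h, v, b & r] = (dl (b :: r)).+1.
Proof.
rewrite /ext /= => /orP[/and3P[hv bv _]|/and3P[hv bv _]].
  by rewrite ltNge (ltW hv) bv.
by rewrite hv ltNge (ltW bv).
Qed.

Lemma sum_ins1 (V : zmodType) (F : nat -> V) v c t h :
  ext v (h :: t ++ [:: c]) ->
  \sum_(u <- ins_all v t) F (dl (h :: u ++ [:: c])) =
  F (dl (h :: t ++ [:: c])) *+ dl (h :: t ++ [:: c]) +
  F (dl (h :: t ++ [:: c])).+1 *+ ((size t).+1 - dl (h :: t ++ [:: c])).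
Proof.
elim: t F h => [|a t IH] F h E.
  rewrite /= big_cons big_nil addr0 /=.
  have := dl_ext E; rewrite /= => ->.
  by case: (c < h) => /=; rewrite ?mulr0n ?mulr1n ?addr0 ?add0r.
rewrite [ins_all _ _]/= big_cons big_map !cat_cons.
rewrite cat_cons in E.
have E' := ext_cons E.
rewrite (dl_ext E).
under eq_bigr => u _ do rewrite -/(dl (a :: u ++ [:: c])).
have -> : dl [:: h, a & t ++ [:: c]] = ((a < h)%R + dl (a :: t ++ [:: c]))%N by [].
set e := (a < h)%R.
rewrite (IH (fun k => F (e + k)%N) a E') -/(dl (a :: t ++ [:: c])).
have := dl_le a (t ++ [:: c]); rewrite size_cat addn1.
set D := dl (a :: t ++ [:: c]) => hD.
case: e; rewrite ?add1n ?add0n.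
  by rewrite subSS mulrS addrA.
by rewrite (subSn hD) mulrS addrCA addrA.
Qed.

Lemma sum_ins0 (V : zmodType) (F : nat -> V) v t h :
  ext v (h :: t) ->
  \sum_(u <- ins_all v t) F (dl (h :: u)) =
  F (dl (h :: t)) *+ dl (h :: t) +
  F (dl (h :: t)).+1 *+ (size t - dl (h :: t)) + F (dl (h :: t) + (v < last h t)%R)%N.
Proof.
elim: t F h => [|a t IH] F h E.
  by rewrite /= big_cons big_nil addr0 /= !addn0 !add0n ?add0r ?addr0.
rewrite [ins_all _ _]/= big_cons big_map.
have E' := ext_cons E.
rewrite (dl_ext E).
under eq_bigr => u _ do rewrite -/(dl (a :: u)).
have -> : dl [:: h, a & t] = ((a < h)%R + dl (a :: t))%N by [].
rewrite [last _ _]/=.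
set e := (a < h)%R.
rewrite (IH (fun k => F (e + k)%N) a E') -/(dl (a :: t)).
have := dl_le a t.
set D := dl (a :: t) => hD.
case: e; rewrite ?add1n ?add0n.
  by rewrite subSS mulrS !addrA.
by rewrite [size _]/= (subSn hD) mulrS !addrA (addrC (F D.+1)).
Qed.

Fixpoint SF (n : nat) : seq (seq int) :=
  match n with
  | 0 => [:: [::]]
  | n'.+1 => flatten [seq ins_all (Posz n) s ++ ins_all (- Posz n) s | s <- SF n']
  end.

Fixpoint PF (n : nat) : seq (seq int) :=
  match n with
  | 0 => [:: [::]]
  | n'.+1 => flatten [seq ins_all (Posz n) s | s <- PF n']
  end.

Lemma mem_ins_perm {v s t} : t \in ins_all v s -> perm_eq t (v :: s).
Proof.
elim: s t => [|a s IH] t /=; first by rewrite inE => /eqP ->.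
rewrite inE => /orP[/eqP ->//|/mapP[t' /IH Ht' ->]].
apply: (perm_trans (y := a :: v :: s)); first by rewrite perm_cons.
by rewrite (perm_catCA [:: a] [:: v] s) perm_refl.
Qed.

Definition bnd n (s : seq int) := (size s == n) && all (fun y => absz y <= n)%N s.

Lemma bnd_ins n v s t : bnd n s -> absz v = n.+1 -> t \in ins_all v s -> bnd n.+1 t.
Proof.
move=> /andP[/eqP sz al] av /mem_ins_perm P.
rewrite /bnd (perm_size P) /= sz eqxx (perm_all _ P) /= av leqnn /=.
by apply/allP => y /(allP al) /leqW.
Qed.

Lemma SF_bnd n s : s \in SF n -> bnd n s.
Proof.
elim: n s => [|n IH] s /=; first by rewrite inE => /eqP ->.
move=> /flattenP[l /mapP[s0 /IH B0 ->]]; rewrite mem_cat => /orP[] H.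
  exact: bnd_ins B0 _ H.
exact: bnd_ins B0 _ H.
Qed.

Lemma PF_bnd n s : s \in PF n -> bnd n s.
Proof.
elim: n s => [|n IH] s /=; first by rewrite inE => /eqP ->.
move=> /flattenP[l /mapP[s0 /IH B0 ->]] H.
exact: bnd_ins B0 _ H.
Qed.

Lemma abs_lt {n} {y : int} : (absz y <= n)%N -> (y < Posz n.+1) && (- Posz n.+1 < y).
Proof.
move=> h; rewrite andbC -ltr_norml.
have : `|y| = Posz (absz y) by rewrite abszE.
by move=> ->; rewrite ltz_nat ltnS.
Qed.

Lemma ext_bnd {n l} : all (fun y => absz y <= n)%N l ->
  ext (Posz n.+1) l && ext (- Posz n.+1) l.
Proof.
move=> al; rewrite /ext; apply/andP; split; apply/orP; [left|right];
  apply/allP => y /(allP al) /abs_lt /andP[]//.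
Qed.

Lemma sumSF_des (V : zmodType) (F : nat -> V) n :
  \sum_(s <- SF n.+1) F (dl (0 :: s)) =
  \sum_(s <- SF n) ((F (dl (0::s)) *+ dl (0::s) + F (dl (0::s)).+1 *+ (n - dl (0::s))) *+ 2
                    + F (dl (0::s)) + F (dl (0::s)).+1).
Proof.
rewrite /= big_flatten big_map; apply: eq_big_seq => s /SF_bnd /andP[/eqP sz al].
have al0 : all (fun y => absz y <= n)%N (0 :: s) by rewrite /= al.
have /andP[e1 e2] := ext_bnd al0.
rewrite big_cat (sum_ins0 _ F _ _ _ e1) (sum_ins0 _ F _ _ _ e2) sz.
have /andP[l1 l2] : (last 0 s < Posz n.+1) && (- Posz n.+1 < last 0 s).
  by apply: abs_lt; apply: (allP al0); apply: mem_last.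
rewrite l2 ltNge (ltW l1) addn0 addn1.
set D := dl (0 :: s).
by rewrite /= addrACA mulr2n addrA.
Qed.

Lemma sumSF_ades (V : zmodType) (F : nat -> V) n :
  \sum_(s <- SF n.+1) F (dl (0 :: s ++ [:: 0])) =
  \sum_(s <- SF n) (F (dl (0::s ++ [:: 0])) *+ dl (0::s ++ [:: 0]) +
       F (dl (0::s ++ [:: 0])).+1 *+ (n.+1 - dl (0::s ++ [:: 0]))) *+ 2.
Proof.
rewrite /= big_flatten big_map; apply: eq_big_seq => s /SF_bnd /andP[/eqP sz al].
have al0 : all (fun y => absz y <= n)%N (0 :: s ++ [:: 0]) by rewrite /= all_cat al.
have /andP[e1 e2] := ext_bnd al0.
by rewrite big_cat (sum_ins1 _ F _ _ _ _ e1) (sum_ins1 _ F _ _ _ _ e2) sz mulr2n.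
Qed.

Lemma sumPF (V : zmodType) (F : nat -> V) n :
  \sum_(s <- PF n.+1) F (dl (0 :: s)) =
  \sum_(s <- PF n) (F (dl (0::s)) *+ dl (0::s) + F (dl (0::s)).+1 *+ (n - dl (0::s))
                    + F (dl (0::s))).
Proof.
rewrite /= big_flatten big_map; apply: eq_big_seq => s /PF_bnd /andP[/eqP sz al].
have al0 : all (fun y => absz y <= n)%N (0 :: s) by rewrite /= al.
have /andP[e1 _] := ext_bnd al0.
rewrite (sum_ins0 _ F _ _ _ e1) sz.
have /andP[l1 l2] : (last 0 s < Posz n.+1) && (- Posz n.+1 < last 0 s).
  by apply: abs_lt; apply: (allP al0); apply: mem_last.
by rewrite ltNge (ltW l1) addn0.
Qed.

Section Polys.
Variable R : comNzRingType.

Definition Up n : {poly R} :=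
  \sum_(s <- SF n) ('X^((2 * dl (0::s)).+1) + 'X^(2 * dl (0::s ++ [:: 0]))).
Definition Vp n : {poly R} :=
  \sum_(s <- PF n) 'X^((dl (0::s)).+1) * (1 + 'X) ^+ n.+1.
Definition op n (p : {poly R}) :=
  (1 - 'X^2) * ('X * p^`()) + 'X^2 * p *+ (2 * n.+1).

Lemma Xderiv k : 'X * ('X^k)^`() = 'X^k *+ k :> {poly R}.
Proof. by case: k => [|k]; rewrite derivXn ?mulr0n ?mulr0 // mulrnAr -exprS. Qed.

Lemma op_sum n (r : seq (seq int)) (f : seq int -> {poly R}) :
  op n (\sum_(s <- r) f s) = \sum_(s <- r) op n (f s).
Proof.
by rewrite /op raddf_sum !mulr_sumr -sumrMnl -big_split.
Qed.

Lemma Up_rec n : Up n.+1 = op n (Up n).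
Proof.
rewrite /Up big_split (sumSF_des _ (fun k => 'X^((2 * k).+1)))
  (sumSF_ades _ (fun k => 'X^(2 * k))) -big_split op_sum.
apply: eq_big_seq => s /SF_bnd /andP[/eqP sz _].
have h1 := dl_le 0 s; have h2 := dl_le 0 (s ++ [:: 0]).
rewrite size_cat sz addn1 in h2; rewrite sz in h1.
set D := dl (0 :: s) in h1 *; set E := dl (0 :: s ++ [:: 0]) in h2 *.
rewrite /=.
rewrite /op derivD mulrDr !Xderiv.
have eD2 k : 'X^((2*k.+1).+1) = 'X^3 * ('X^k * 'X^k) :> {poly R}.
  by rewrite mulnS mul2n -addnn -addSn !exprD.
have eD k : 'X^((2*k).+1) = 'X * ('X^k * 'X^k) :> {poly R}.
  by rewrite exprS mul2n -addnn exprD.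
have eE2 k : 'X^(2*k.+1) = 'X^2 * ('X^k * 'X^k) :> {poly R}.
  by rewrite mulnS mul2n -addnn !exprD.
have eE k : 'X^(2*k) = ('X^k * 'X^k) :> {poly R}.
  by rewrite mul2n -addnn exprD.
rewrite (eD2 D) (eD D) (eE2 E) (eE E).
rewrite (mulrnBr _ h1) (mulrnBr _ h2).
ring.
Qed.

Lemma Vp_rec n : Vp n.+1 = op n (Vp n).
Proof.
rewrite /Vp (sumPF _ (fun k => 'X^(k.+1) * (1 + 'X) ^+ n.+2)) op_sum.
apply: eq_big_seq => s /PF_bnd /andP[/eqP sz _].
have h1 := dl_le 0 s; rewrite sz in h1.
set D := dl (0 :: s) in h1 *.
have d1 : (1 + 'X : {poly R})^`() = 1 by rewrite derivD derivX -polyC1 derivC add0r.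
rewrite /op derivM !deriv_exp d1 derivX /=.
rewrite !exprS (mulrnBr _ h1).
ring.
Qed.

Lemma UV1 : Up 1 = Vp 1.
Proof.
rewrite /Up /Vp /= !big_cons !big_nil /= !addn0 !addr0 muln0 muln1.
ring.
Qed.

Lemma UV n : (1 <= n)%N -> Up n = Vp n.
Proof.
case: n => // n _; elim: n => [|n IH]; first exact: UV1.
by rewrite Up_rec Vp_rec IH.
Qed.
End Polys.


Definition chr n (s : seq int) := perm_eq [seq absz y | y <- s] (iota 1 n).

Lemma iotaS1 n : perm_eq (iota 1 n.+1) (n.+1 :: iota 1 n).
Proof.
have -> : iota 1 n.+1 = iota 1 n ++ [:: n.+1] by rewrite -{1}(addn1 n) iotaD add1n.
by rewrite cats1 perm_rcons perm_refl.
Qed.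

Lemma uniq_ins v s : v \notin s -> uniq (ins_all v s).
Proof.
elim: s => [//|a s IH] /=; rewrite inE negb_or => /andP[va vs].
rewrite (map_inj_uniq (fun x y (e : a :: x = a :: y) => let: erefl := e in erefl)) IH // andbT.
by apply/mapP => -[t _ [e _]]; rewrite e eqxx in va.
Qed.

Lemma ins_filter {P : pred int} {v s t} : ~~ P v -> t \in ins_all v s ->
  filter P t = filter P s.
Proof.
move=> Pv; elim: s t => [|a s IH] t /=; first by rewrite inE => /eqP -> /=; rewrite (negbTE Pv).
rewrite inE => /orP[/eqP -> /=|/mapP[t' /IH e ->] /=]; first by rewrite (negbTE Pv).
by rewrite e.
Qed.

Lemma uniq_flatten_map (T U : eqType) (f : T -> seq U) (g : U -> T) L :
  uniq L -> (forall x, x \in L -> uniq (f x)) ->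
  (forall x y, x \in L -> y \in f x -> g y = x) -> uniq (flatten (map f L)).
Proof.
elim: L => [//|a L IH] /= /andP[aL uL] uf hg.
rewrite cat_uniq uf ?inE ?eqxx // IH //; last first.
- by move=> x y xL; apply: hg; rewrite inE xL orbT.
- by move=> x xL; apply: uf; rewrite inE xL orbT.
rewrite andbT; apply/hasPn => y /flattenP[l /mapP[b bL ->]] yb.
apply/negP => ya.
have e1 := hg a y (mem_head _ _) ya.
have e2 : g y = b by apply: hg yb; rewrite inE bL orbT.
by move: aL; rewrite -e1 e2 bL.
Qed.

Lemma ins_mem v s t : t \in ins_all v s -> v \in t.
Proof. by move/mem_ins_perm/perm_mem ->; rewrite mem_head. Qed.

Lemma SF_uniq n : uniq (SF n).
Proof.
elim: n => [//|n IH] /=.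
apply: (@uniq_flatten_map _ _ (fun s => ins_all (Posz n.+1) s ++ ins_all (- Posz n.+1) s) (filter (fun y : int => absz y <= n)%N)) => //.
  move=> s /SF_bnd /andP[_ al].
  have vs : forall v, absz v = n.+1 -> v \notin s.
    by move=> v av; apply/negP => /(allP al); rewrite /= av ltnn.
  rewrite cat_uniq !uniq_ins ?vs ?abszN //= andbT.
  apply/hasPn => t /mem_ins_perm /perm_mem tv; apply/negP => /ins_mem.
  by rewrite tv inE (negbTE (vs _ _)) // orbF -eqr_oppLR.
move=> s t /SF_bnd /andP[_ al]; rewrite mem_cat => /orP[] H;
  rewrite (ins_filter _ H) ?(all_filterP al) /= ?abszN ?ltnn //.
Qed.

Lemma PF_uniq n : uniq (PF n).
Proof.
elim: n => [//|n IH] /=.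
apply: (@uniq_flatten_map _ _ (fun s => ins_all (Posz n.+1) s) (filter (fun y : int => absz y <= n)%N)) => //.
  move=> s /PF_bnd /andP[_ al]; apply: uniq_ins.
  by apply/negP => /(allP al); rewrite /= ltnn.
move=> s t /PF_bnd /andP[_ al] H.
by rewrite (ins_filter _ H) ?(all_filterP al) //= ltnn.
Qed.

Lemma chr_ins {n v s t} : chr n s -> absz v = n.+1 -> t \in ins_all v s -> chr n.+1 t.
Proof.
move=> c av /mem_ins_perm P; rewrite /chr.
have P1 := perm_map absz P.
apply: (perm_trans P1); rewrite /= av.
have P2 := iotaS1 n; rewrite perm_sym in P2.
apply: perm_trans P2.
by rewrite perm_cons.
Qed.

Lemma SF_chr n s : s \in SF n -> chr n s.
Proof.
elim: n s => [|n IH] s /=; first by rewrite inE => /eqP ->.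
move=> /flattenP[l /mapP[s0 /IH c0 ->]]; rewrite mem_cat => /orP[] H.
  exact: chr_ins c0 _ H.
by apply: chr_ins c0 _ H; rewrite abszN.
Qed.

Lemma PF_chr n s : s \in PF n -> chr n s && all (fun y => 0 < y) s.
Proof.
elim: n s => [|n IH] s /=; first by rewrite inE => /eqP ->.
move=> /flattenP[l /mapP[s0 /IH /andP[c0 p0] ->]] H.
by rewrite (chr_ins c0 _ H) //= (perm_all _ (mem_ins_perm H)) /= p0.
Qed.

Lemma ins_filter_mem {f : int -> nat} {y t} : uniq (map f t) -> y \in t ->
  t \in ins_all y (filter (fun z => f z != f y) t).
Proof.
elim: t => [//|a t IH] /= /andP[fa ut]; rewrite inE => /orP[/eqP ->|yt].
  rewrite eqxx /=.
  have -> : filter (fun z => f z != f a) t = t.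
    apply/all_filterP/allP => z zt; apply/negP => /eqP e.
    by move: fa; rewrite -e map_f.
  by case: t {IH fa ut} => [|b t] /=; rewrite inE eqxx.
have -> : (f a != f y).
  by apply/negP => /eqP e; move: fa; rewrite e map_f.
rewrite [ins_all _ (_ :: _)]/= inE; apply/orP; right.
by apply: map_f; apply: IH.
Qed.

Lemma filter_iota n : filter (fun k => k != n.+1) (iota 1 n) = iota 1 n.
Proof.
apply/all_filterP/allP => k; rewrite mem_iota => /andP[_ kn].
by apply/negP => /eqP e; move: kn; rewrite e add1n ltnn.
Qed.

Lemma chr_rem {n t y} : chr n.+1 t -> y \in t -> absz y = n.+1 ->
  chr n (filter (fun z => absz z != n.+1) t).
Proof.
move=> c yt ay; rewrite /chr.
have -> : [seq absz z | z <- filter (fun z => absz z != n.+1) t] =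
   filter (fun k => k != n.+1) [seq absz z | z <- t] by rewrite filter_map.
apply: perm_trans (perm_filter _ c) _.
apply: perm_trans (perm_filter _ (iotaS1 n)) _.
by rewrite /= eqxx filter_iota perm_refl.
Qed.

Lemma chr_uniq {n t} : chr n t -> uniq (map absz t).
Proof. by move=> c; rewrite (perm_uniq c) iota_uniq. Qed.

Lemma chr_max {n t} : chr n.+1 t -> exists2 y, y \in t & absz y = n.+1.
Proof.
move=> c; have : n.+1 \in map absz t by rewrite (perm_mem c) mem_iota add1n ltnSn.
by case/mapP => y yt ->; exists y.
Qed.

Lemma abs_cases {n} {y : int} : absz y = n.+1 -> (y = Posz n.+1) \/ (y = - Posz n.+1).
Proof. case: y => k /=; first by move=> ->; left. by case=> ->; right; rewrite NegzE. Qed.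

Lemma chr0 {s} : chr 0 s -> s = [::].
Proof. by move/perm_size; rewrite size_map; case: s. Qed.

Lemma chr_SF n s : chr n s -> s \in SF n.
Proof.
elim: n s => [|n IH] t c; first by rewrite (chr0 c).
have [y yt ay] := chr_max c.
have ut := chr_uniq c.
have := ins_filter_mem ut yt; rewrite ay => H.
have Hs := IH _ (chr_rem c yt ay).
apply/flattenP; eexists; first by apply: map_f Hs.
by rewrite mem_cat; case: (abs_cases ay) => e; rewrite -e H ?orbT.
Qed.

Lemma chr_PF n s : chr n s -> all (fun y => 0 < y) s -> s \in PF n.
Proof.
elim: n s => [|n IH] t c pt; first by rewrite (chr0 c).
have [y yt ay] := chr_max c.
have ut := chr_uniq c.
have := ins_filter_mem ut yt; rewrite ay => H.
have Hs : filter (fun z => absz z != n.+1) t \in PF n.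
  apply: IH (chr_rem c yt ay) _.
  by apply/allP => z; rewrite mem_filter => /andP[_ /(allP pt)].
apply/flattenP; eexists; first by apply: map_f Hs.
case: (abs_cases ay) => e; first by rewrite -e.
by move: (allP pt _ yt); rewrite e oppr_gt0.
Qed.


Lemma mkseq_behead (u : seq int) k :
  mkseq (nth 0 u) k.+1 = nth 0 u 0 :: mkseq (nth 0 (behead u)) k.
Proof.
rewrite /mkseq -add1n iotaD /= (iotaDl 1 0) -map_comp.
by congr (_ :: _); apply: eq_map => i /=; rewrite nth_behead.
Qed.

Lemma cnt_dl (u : seq int) m :
  count (fun i => nth 0 u i.+1 < nth 0 u i) (iota 0 m) = dl (mkseq (nth 0 u) m.+1).
Proof.
elim: m u => [|m IH] u //.
rewrite (mkseq_behead _ m.+1) (mkseq_behead (behead u) m).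
rewrite -[m.+1]add1n iotaD count_cat /= add0n (iotaDl 1 0) count_map.
rewrite (@eq_count _ _ (fun i => nth 0 (behead u) i.+1 < nth 0 (behead u) i)); last first.
  by move=> i /=; rewrite !nth_behead add1n.
by rewrite IH (mkseq_behead (behead u) m) /= !nth_behead addn0.
Qed.

Definition Lw n (w : {perm 'I_n * bool}) : seq int :=
  [seq sval_of (w (j, false)) | j <- enum 'I_n].
Definition Lp n (p : 'S_n) : seq int := [seq Posz (p j).+1 | j <- enum 'I_n].
Arguments Lw {n}. Arguments Lp {n}.

Lemma nth_enum_map n (f : 'I_n -> int) k :
  nth 0 [seq f j | j <- enum 'I_n] k = oapp f 0 (insub k).
Proof.
case: insubP => [j kn <-|kn] /=.
  by rewrite (nth_map j) ?size_enum_ord // nth_ord_enum.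
by rewrite nth_default // size_map size_enum_ord leqNgt.
Qed.

Lemma wval_nth n (w : {perm 'I_n * bool}) i : wval w i = nth 0 (0 :: Lw w) i.
Proof. by case: i => [|k] //=; rewrite nth_enum_map. Qed.

Lemma size_Lw n (w : {perm 'I_n * bool}) : size (Lw w) = n.
Proof. by rewrite size_map size_enum_ord. Qed.
Arguments size_Lw {n}.

Lemma des_signedE n (w : {perm 'I_n * bool}) : des_signed w = dl (0 :: Lw w).
Proof.
rewrite /des_signed (eq_count (a2 := fun i => nth 0 (0 :: Lw w) i.+1 < nth 0 (0 :: Lw w) i)); last first.
  by move=> i; rewrite !wval_nth.
rewrite cnt_dl.
have -> : n.+1 = size (0 :: Lw w) by rewrite /= size_Lw.
by rewrite mkseq_nth.
Qed.

Lemma ades_signedE n (w : {perm 'I_n * bool}) : ades_signed w = dl (0 :: Lw w ++ [:: 0]).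
Proof.
have e : forall i, nth 0 (0 :: Lw w) i = nth 0 (0 :: Lw w ++ [:: 0]) i.
  case=> [|i] //=; rewrite nth_cat; case: ifP => // /negbT; rewrite -leqNgt => h.
  by rewrite nth_default //; case: (i - size (Lw w))%N => [|[]].
rewrite /ades_signed (eq_count (a2 := fun i => nth 0 (0 :: Lw w ++ [:: 0]) i.+1 < nth 0 (0 :: Lw w ++ [:: 0]) i)); last first.
  by move=> i; rewrite !wval_nth !e.
rewrite cnt_dl.
have -> : n.+2 = size (0 :: Lw w ++ [:: 0]) by rewrite /= size_cat size_Lw addn1.
by rewrite mkseq_nth.
Qed.

Lemma size_Lp n (p : 'S_n) : size (Lp p) = n.
Proof. by rewrite size_map size_enum_ord. Qed.
Arguments size_Lp {n}.

Lemma des_permE n (p : 'S_n) : des_perm p = dl (0 :: Lp p).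
Proof.
rewrite /des_perm cardsE cardE /enum_mem size_filter -enumT.
rewrite (eq_count (a2 := preim val (fun k => (k.+1 < n)%N && (nth 0 (Lp p) k.+1 < nth 0 (Lp p) k)))); last first.
  move=> i /=; rewrite unfold_in /=; case: (ltnP i.+1 n) => h //=.
  rewrite !nth_enum_map insubT /= valK /= ltz_nat ltnS.
  apply/existsP/idP => [[j /andP[/eqP e]]|lt].
    by have -> : j = Ordinal h by apply: val_inj.
  by exists (Ordinal h); rewrite /= eqxx.
rewrite -count_map val_enum_ord.
case: n p => [|n] p; first by rewrite /Lp; case: (enum _) (size_enum_ord 0).
have sL := size_Lp p.
have -> : dl (0 :: Lp p) = dl (Lp p).
  have : 0 < nth 0 (Lp p) 0 by rewrite nth_enum_map insubT.
  case: (Lp p) => // a r /= h0.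
  by rewrite ltNge (ltW h0).
rewrite -[in RHS](mkseq_nth 0 (Lp p)) sL -cnt_dl.
have -> : iota 0 n.+1 = iota 0 n ++ [:: n] by rewrite -{1}(addn1 n) iotaD.
rewrite count_cat /= ltnn /= !addn0.
apply: eq_in_count => k; rewrite mem_iota /= => kn.
by rewrite ltnS kn.
Qed.


Lemma perm_enum_inj n (g : 'I_n -> 'I_n) : injective g ->
  perm_eq [seq (g j).+1 | j <- enum 'I_n] (iota 1 n).
Proof.
move=> gi.
have -> : [seq (g j).+1 | j <- enum 'I_n] = map succn (map val (map g (enum 'I_n))).
  by rewrite -!map_comp.
have P : perm_eq (map g (enum 'I_n)) (enum 'I_n).
  apply: uniq_perm; [by rewrite map_inj_uniq // enum_uniq | exact: enum_uniq |].
  have [h gh hg] := injF_bij gi.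
  move=> x; rewrite mem_enum; apply/mapP; exists (h x); rewrite ?mem_enum ?hg //.
have P2 := perm_map val P; rewrite val_enum_ord in P2.
have P3 := perm_map succn P2.
have e : map succn (iota 0 n) = iota 1 n by rewrite (iotaDl 1 0).
by rewrite -e.
Qed.

Lemma signedP {n} {w : {perm 'I_n * bool}} : w \in signed_perms n ->
  forall a, w (negpm a) = negpm (w a).
Proof. by rewrite inE => /forallP h a; apply/eqP. Qed.

Lemma absz_sval n (a : 'I_n * bool) : absz (sval_of a) = a.1.+1.
Proof. by rewrite /sval_of; case: a.2; rewrite ?abszN. Qed.

Lemma sval_inj n : injective (@sval_of n).
Proof.
move=> [i b] [j c]; rewrite /sval_of /=.
case: b; case: c => /= e.
- by move/oppr_inj: e => [] /val_inj ->.
- by have := congr1 (fun z : int => 0 < z) e; rewrite /= oppr_gt0 !ltz_nat.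
- by have := congr1 (fun z : int => 0 < z) e; rewrite /= oppr_gt0 !ltz_nat.
- by case: e => /val_inj ->.
Qed.

Lemma Lw_inj n : {in signed_perms n &, injective (@Lw n)}.
Proof.
move=> w1 w2 h1 h2 /eq_in_map e; apply/permP => -[j b].
have e1 : w1 (j, false) = w2 (j, false) by apply: sval_inj; apply: e; rewrite mem_enum.
case: b => //.
have := signedP h1 (j, false); have := signedP h2 (j, false); rewrite /negpm /= => -> ->.
by rewrite e1.
Qed.

Lemma Lw_chr n w : w \in signed_perms n -> chr n (Lw w).
Proof.
move=> hw; rewrite /chr.
have -> : [seq absz y | y <- Lw w] = [seq ((w (j, false)).1).+1 | j <- enum 'I_n].
  by rewrite /Lw -map_comp; apply: eq_map => j /=; rewrite absz_sval.
apply: perm_enum_inj => j k.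
case E1 : (w (j, false)) => [x b]; case E2 : (w (k, false)) => [y c] /= exy.
subst y.
case: (eqVneq b c) => [bc|bc].
  by move: E1; rewrite bc -E2 => /perm_inj [].
have cb : c = ~~ b by case: b c bc {E1 E2} => [] [].
have := signedP hw (k, false); rewrite E2 /negpm /= cb negbK -E1 => /perm_inj.
by [].
Qed.

Lemma Lp_chr n (p : 'S_n) : chr n (Lp p) && all (fun y => 0 < y) (Lp p).
Proof.
apply/andP; split.
  rewrite /chr /Lp -map_comp.
  have -> : [seq (absz \o (fun j => Posz (p j).+1)) j | j <- enum 'I_n] = [seq (p j).+1 | j <- enum 'I_n] by [].
  by apply: perm_enum_inj; apply: perm_inj.
by apply/allP => y /mapP[j _ ->].
Qed.

Lemma Lp_inj n : injective (@Lp n).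
Proof.
move=> p1 p2 /eq_in_map e; apply/permP => j.
by have := e j (mem_enum _ j) => -[] /val_inj.
Qed.

Lemma chr_size {n s} : chr n s -> size s = n.
Proof. by move/perm_size; rewrite size_map size_iota. Qed.

Lemma chr_nth {n s} (j : 'I_n) : chr n s -> (0 < absz (nth (0:int) s j) <= n)%N.
Proof.
move=> c.
have : absz (nth 0 s j) \in iota 1 n.
  rewrite -(perm_mem c) -(nth_map (0:int) 0%N); last by rewrite (chr_size c).
  by apply: mem_nth; rewrite size_map (chr_size c).
by rewrite mem_iota add1n ltnS.
Qed.

Definition idx n (s : seq int) (j : 'I_n.+1) : 'I_n.+1 := inord (absz (nth 0 s j)).-1.
Arguments idx {n}.

Lemma idxE n s (j : 'I_n.+1) : chr n.+1 s -> (idx s j : nat).+1 = absz (nth 0 s j).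
Proof.
move=> c; have /andP[h1 h2] := chr_nth j c.
by rewrite /idx inordK ?prednK // -ltnS prednK.
Qed.

Lemma idx_inj {n s} : chr n.+1 s -> injective (idx (n:=n) s).
Proof.
move=> c j k e.
have : absz (nth 0 s j) = absz (nth 0 s k) by rewrite -!idxE // e.
rewrite -!(nth_map (0:int) 0%N (fun y => absz y)) ?(chr_size c) //.
move/eqP; rewrite nth_uniq ?size_map ?(chr_size c) ?(chr_uniq c) //.
by move/eqP/val_inj.
Qed.

Lemma int_abs_sign (y : int) : (if y < 0 then - Posz (absz y) else Posz (absz y)) = y.
Proof. by case: y => k //=; rewrite NegzE. Qed.

Lemma map_nth_enum {n} {s : seq int} : size s = n -> [seq nth 0 s j | j : 'I_n <- enum 'I_n] = s.
Proof.
move=> sz.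
have -> : [seq nth 0 s j | j : 'I_n <- enum 'I_n] = [seq nth 0 s i | i <- [seq nat_of_ord j | j : 'I_n <- enum 'I_n]].
  by rewrite -map_comp.
by rewrite val_enum_ord -{2}(mkseq_nth 0 s) sz.
Qed.

Lemma chr_Lw {n s} : chr n s -> exists2 w, w \in signed_perms n & Lw w = s.
Proof.
case: n => [|n] c.
  exists (1%g : {perm 'I_0 * bool}); first by rewrite inE; apply/forallP => -[[]].
  rewrite (chr0 c) /Lw; have -> : enum 'I_0 = [::] by apply: size0nil; rewrite size_enum_ord.
  by [].
pose g (a : 'I_n.+1 * bool) := (idx s a.1, a.2 (+) (nth 0 s a.1 < 0)).
have gi : injective g.
  by move=> [j b] [k b'] [] /(idx_inj c) e; subst k => /addIb ->.
exists (perm gi).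
  rewrite inE; apply/forallP => -[j b]; rewrite !permE /g /negpm /= addNb.
  by [].
rewrite /Lw -[RHS](map_nth_enum (chr_size c)); apply: eq_map => j.
rewrite permE /g /sval_of /= idxE //.
exact: int_abs_sign.
Qed.

Lemma chr_Lp {n s} : chr n s -> all (fun y => 0 < y) s -> exists p : 'S_n, Lp p = s.
Proof.
case: n => [|n] c pos.
  exists (1%g : 'S_0); rewrite (chr0 c) /Lp; have -> : enum 'I_0 = [::] by apply: size0nil; rewrite size_enum_ord.
  by [].
exists (perm (idx_inj c)).
rewrite /Lp -[RHS](map_nth_enum (chr_size c)); apply: eq_map => j.
rewrite permE idxE // gez0_abs //; apply: ltW; apply: (allP pos); apply: mem_nth.
by rewrite (chr_size c).
Qed.

Lemma sum_signed (V : zmodType) n (G : seq int -> V) :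
  \sum_(w in signed_perms n) G (Lw w) = \sum_(s <- SF n) G s.
Proof.
have PE : perm_eq (map (@Lw n) (enum (signed_perms n))) (SF n).
  apply: uniq_perm; rewrite ?SF_uniq //.
    rewrite map_inj_in_uniq ?enum_uniq // => x y; rewrite !mem_enum; exact: Lw_inj.
  move=> s; apply/mapP/idP => [[w hw ->]|hs].
    by apply: chr_SF; apply: Lw_chr; rewrite mem_enum in hw.
  have [w hw <-] := chr_Lw (@SF_chr _ _ hs).
  by exists w; rewrite ?mem_enum.
by rewrite -big_enum -(perm_big _ PE) big_map.
Qed.

Lemma sum_perm (V : zmodType) n (G : seq int -> V) :
  \sum_(p : 'S_n) G (Lp p) = \sum_(s <- PF n) G s.
Proof.
have PE : perm_eq (map (@Lp n) (enum 'S_n)) (PF n).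
  apply: uniq_perm; rewrite ?PF_uniq //.
    by rewrite map_inj_uniq ?enum_uniq //; exact: Lp_inj.
  move=> s; apply/mapP/idP => [[p _ ->]|hs].
    by case/andP: (Lp_chr _ p) => c pos; apply: chr_PF.
  have /andP[c pos] := @PF_chr _ _ hs.
  have [p <-] := chr_Lp c pos.
  by exists p; rewrite ?mem_enum.
rewrite -(perm_big _ PE) big_map enumT.
by [].
Qed.


Theorem mainTheorem3 (R : realFieldType) (n : nat) (x : R) :
  (1 <= n)%N -> x != 0 ->
  (\sum_(w in signed_perms n) (x ^+ 2) ^+ des_signed w)
    + x^-1 * (\sum_(w in signed_perms n) (x ^+ 2) ^+ ades_signed w)
  = (1 + x) ^+ n.+1 * (\sum_(p : 'S_n) x ^+ des_perm p).
Proof.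
move=> n1 x0.
have := congr1 (fun p => p.[x]) (UV R _ n1).
rewrite /Up /Vp !horner_sum /=.
under eq_bigr => s _ do rewrite hornerD !hornerXn.
under [in RHS]eq_bigr => s _ do rewrite hornerM hornerXn horner_exp hornerD hornerC hornerX.
move=> E; apply: (mulfI x0).
rewrite mulrDr mulrA divff // mul1r.
under eq_bigr => w _ do rewrite des_signedE.
under [in X in _ + X]eq_bigr => w _ do rewrite ades_signedE.
rewrite (sum_signed _ _ (fun s => (x ^+ 2) ^+ dl (0 :: s)))
        (sum_signed _ _ (fun s => (x ^+ 2) ^+ dl (0 :: s ++ [:: 0]))).
under [in RHS]eq_bigr => p _ do rewrite des_permE.
rewrite (sum_perm _ _ (fun s => x ^+ dl (0 :: s))).
rewrite mulr_sumr.
under eq_bigr => s _ do rewrite -exprM -exprS.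
under [in X in _ + X]eq_bigr => s _ do rewrite -exprM.
rewrite -big_split E !mulr_sumr; apply: eq_bigr => s _.
by rewrite exprS mulrCA mulrC.
Qed.
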